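(* Let $X=\{r_0,r_1,i\}$, $R=\{r_0,r_1\}$, $I=\{i\}$, $\mathcal A=\mathcal P(X)$, and define $\Pi_R:X\to R$ by $\Pi_R(r_0)=r_0$, $\Pi_R(r_1)=r_1$, $\Pi_R(i)=r_0$. Let $G=\{(x,x):x\in X\}$. Fix $\eta\in[0,1)$ with $\eta\neq0$. Let $m(i)=0$, $m(r_0)=m(r_1)=\frac1{1-\eta}$, $\mu(B)=\sum_{x\in B}m(x)$ for $B\subseteq X$, and let $\mu^{\otimes2}$ be the finitely additive set function on $\mathcal P(X\times X)$ determined by $\mu^{\otimes2}(A\times B)=\mu(A)\mu(B)$ (equivalently $\mu^{\otimes2}(S)=\sum_{(x,y)\in S}m(x)m(y)$). Then $(X,\mathcal P(X),\mu,\mu^{\otimes2},R,I,\Pi_R,G,E_0,\eta)$ with $E_0=\mu(R)+\mu(I)=\frac{2}{1-\eta}$ is an admissible structural model.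
   Context: For relations, $H\circ K=\{(x,z):\exists y\,(x,y)\in H,(y,z)\in K\}$. An admissible structural model is a tuple $(X,\mathcal A,\mu,\mu^{\otimes2},R,I,\Pi_R,G,E_0,\eta)$ with $X$ nonempty, $\mathcal A$ an algebra on $X$, $\mu:\mathcal A\to[0,\infty)$ finitely additive, $\mu^{\otimes2}$ finitely additive on the product algebra with $\mu^{\otimes2}(B_1\times B_2)=\mu(B_1)\mu(B_2)$, $R,I\in\mathcal A$ disjoint, $\Pi_R:X\to R$, $G$ in the product algebra, $E_0>0$, $\eta\in[0,1]$, satisfying: Axiom I: $\Pi_R\circ\Pi_R=\Pi_R$, $\Pi_R|_R=\mathrm{id}_R$, $\Pi_R^{-1}(B)\in\mathcal A$ for measurable $B\subseteq R$; Axiom II: $G$ reflexive, symmetric, $G\circ G=G$; Axiom III: $\mu(R)+\mu(I)=E_0$, $\mu(\Pi_R^{-1}(B))=\mu(B)$ for measurable $B\subseteq R$, and for all $B\in\mathcal A$, $\mu^{\otimes2}((B\times X)\cap G)=\mu(B)+\eta\,\mu^{\otimes2}((\Pi_R^{-1}(B)\times X)\cap G)$. *)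

(* Defs.v *)
From Stdlib Require Import Reals Lra List ClassicalEpsilon.
Open Scope R_scope.

Definition pset (X : Type) := X -> Prop.

Definition seteq {X : Type} (A B : pset X) : Prop := forall x, A x <-> B x.

Definition setU {X} (A B : pset X) : pset X := fun x => A x \/ B x.
Definition setC {X} (A : pset X) : pset X := fun x => ~ A x.
Definition setI {X} (A B : pset X) : pset X := fun x => A x /\ B x.
Definition setT {X} : pset X := fun _ => True.
Definition subset {X} (A B : pset X) : Prop := forall x, A x -> B x.
Definition disjoint {X} (A B : pset X) : Prop := forall x, A x -> B x -> False.
Definition preimage {X Y} (f : X -> Y) (B : pset Y) : pset X := fun x => B (f x).
Definition rect {X} (B1 B2 : pset X) : pset (X * X) :=
  fun p => B1 (fst p) /\ B2 (snd p).

Definition is_algebra {X} (A : pset (pset X)) : Prop :=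
  A setT /\ (forall B, A B -> A (setC B)) /\ (forall B C, A B -> A C -> A (setU B C)).

Definition prod_alg {X} (A : pset (pset X)) : pset (pset (X * X)) :=
  fun S => forall C : pset (pset (X * X)), is_algebra C ->
    (forall B1 B2, A B1 -> A B2 -> C (rect B1 B2)) -> C S.

Definition fin_additive_nonneg {X} (A : pset (pset X)) (mu : pset X -> R) : Prop :=
  (forall B, A B -> 0 <= mu B) /\
  (forall B C, A B -> A C -> disjoint B C -> mu (setU B C) = mu B + mu C).

Definition rel_comp {X} (H K : pset (X * X)) : pset (X * X) :=
  fun p => exists y, H (fst p, y) /\ K (y, snd p).

(* Admissible structural model (X, A, mu, mu2, R, I, PiR, G, E0, eta).
   PiR : X -> R is encoded as a map X -> X with values in Rs. *)
Definition admissible (X : Type) (A : pset (pset X)) (mu : pset X -> R)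
  (mu2 : pset (X * X) -> R) (Rs Is : pset X) (PiR : X -> X) (G : pset (X * X))
  (E0 eta : R) : Prop :=
  inhabited X /\
  is_algebra A /\
  fin_additive_nonneg A mu /\
  fin_additive_nonneg (prod_alg A) mu2 /\
  (forall B1 B2, A B1 -> A B2 -> mu2 (rect B1 B2) = mu B1 * mu B2) /\
  A Rs /\ A Is /\ disjoint Rs Is /\
  (forall x, Rs (PiR x)) /\
  prod_alg A G /\
  0 < E0 /\ 0 <= eta <= 1 /\
  (forall x, PiR (PiR x) = PiR x) /\
  (forall x, Rs x -> PiR x = x) /\
  (forall B, A B -> subset B Rs -> A (preimage PiR B)) /\
  (forall x, G (x, x)) /\
  (forall x y, G (x, y) -> G (y, x)) /\
  seteq (rel_comp G G) G /\
  mu Rs + mu Is = E0 /\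
  (forall B, A B -> subset B Rs -> mu (preimage PiR B) = mu B) /\
  (forall B, A B ->
     mu2 (setI (rect B setT) G) =
     mu B + eta * mu2 (setI (rect (preimage PiR B) setT) G)).

Inductive X3 : Type := r0 | r1 | ii.

Definition R3 : pset X3 := fun x => x = r0 \/ x = r1.
Definition I3 : pset X3 := fun x => x = ii.
Definition PowX3 : pset (pset X3) := fun _ => True.

Definition Pi3 (x : X3) : X3 :=
  match x with r0 => r0 | r1 => r1 | ii => r0 end.

Definition G3 : pset (X3 * X3) := fun p => fst p = snd p.

Definition m3 (eta : R) (x : X3) : R :=
  match x with ii => 0 | _ => 1 / (1 - eta) end.

Definition ind {T} (P : pset T) (t : T) : R :=
  if excluded_middle_informative (P t) then 1 else 0.

Definition all3 : list X3 := r0 :: r1 :: ii :: nil.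

Definition mu3 (eta : R) (B : pset X3) : R :=
  fold_right Rplus 0 (map (fun x => ind B x * m3 eta x) all3).

Definition mu3x2 (eta : R) (S : pset (X3 * X3)) : R :=
  fold_right Rplus 0
    (map (fun x => fold_right Rplus 0
            (map (fun y => ind S (x, y) * (m3 eta x * m3 eta y)) all3)) all3).

(* Main.v *)
Require Import Defs.
From Stdlib Require Import Reals.
From Stdlib Require Import Lra Classical ClassicalEpsilon FunctionalExtensionality PropExtensionality.
Open Scope R_scope.
Import Defs.

Lemma ind_true {T} (P : pset T) t : P t -> ind P t = 1.
Proof. intro H; unfold ind; destruct (excluded_middle_informative (P t)); tauto. Qed.
Lemma ind_false {T} (P : pset T) t : ~ P t -> ind P t = 0.
Proof. intro H; unfold ind; destruct (excluded_middle_informative (P t)); tauto. Qed.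
Lemma ind_ge0 {T} (P : pset T) t : 0 <= ind P t.
Proof. unfold ind; destruct (excluded_middle_informative (P t)); lra. Qed.
Lemma ind_U {T} (B C : pset T) t : disjoint B C -> ind (setU B C) t = ind B t + ind C t.
Proof.
  intro D. unfold ind, setU.
  destruct (excluded_middle_informative (B t \/ C t));
  destruct (excluded_middle_informative (B t));
  destruct (excluded_middle_informative (C t)); try lra; firstorder.
Qed.
Lemma ind_rect {T} (B1 B2 : pset T) x y : ind (rect B1 B2) (x, y) = ind B1 x * ind B2 y.
Proof.
  unfold ind, rect; simpl.
  destruct (excluded_middle_informative (B1 x /\ B2 y));
  destruct (excluded_middle_informative (B1 x));
  destruct (excluded_middle_informative (B2 y)); try lra; tauto.
Qed.

Ltac memb := unfold setI, rect, setT, G3, preimage, Pi3, R3, I3; simpl; intuition congruence.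
Ltac ind_simpl :=
  repeat match goal with
  | |- context [ind ?P ?t] =>
      first [ rewrite (ind_true P t) by memb | rewrite (ind_false P t) by memb ]
  end.

Theorem theorem5p2 (eta : R) (Heta : 0 <= eta < 1) (Heta0 : eta <> 0) :
  admissible X3 PowX3 (mu3 eta) (mu3x2 eta) R3 I3 Pi3 G3 (2 / (1 - eta)) eta.
Proof.
  assert (Hm : 0 < 1 / (1 - eta)) by (apply Rdiv_lt_0_compat; lra).
  assert (Hm3 : forall x, 0 <= m3 eta x) by (destruct x; simpl; lra).
  unfold admissible.
  repeat split.
  - exact r0.
  - intros B _. unfold mu3; simpl.
    pose proof (ind_ge0 B r0); pose proof (ind_ge0 B r1); pose proof (ind_ge0 B ii).
    specialize (Hm3 r0) as a; specialize (Hm3 r1) as b; specialize (Hm3 ii) as c.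
    simpl in *. nra.
  - intros B C _ _ D. unfold mu3; simpl. rewrite !(ind_U B C) by exact D. ring.
  - intros S _. unfold mu3x2; simpl.
    repeat match goal with |- context [ind S ?t] => pose proof (ind_ge0 S t); generalize dependent (ind S t); intros end.
    assert (0 <= 1/(1-eta) * (1/(1-eta))) by nra.
    nra.
  - intros B C _ _ D. unfold mu3x2; simpl. rewrite !(ind_U B C) by exact D. ring.
  - intros B1 B2 _ _. unfold mu3x2, mu3; simpl. rewrite !ind_rect. ring.
  - unfold disjoint, R3, I3; intros x [-> | ->] H; discriminate.
  - intro x; destruct x; simpl; unfold R3; auto.
  - intros C [HT [HC HU]] Hr.
    assert (E : G3 = setU (setU (rect (fun x => x = r0) (fun x => x = r0))
                                (rect (fun x => x = r1) (fun x => x = r1)))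
                         (rect (fun x => x = ii) (fun x => x = ii))).
    { apply functional_extensionality; intros [a b].
      apply propositional_extensionality. unfold G3, setU, rect; simpl.
      destruct a, b; intuition congruence. }
    rewrite E. apply HU; [apply HU|]; apply Hr; exact I.
  - apply Rdiv_lt_0_compat; lra.
  - lra.
  - lra.
  - intro x; destruct x; reflexivity.
  - intros x [-> | ->]; reflexivity.
  - unfold G3; simpl; intros; congruence.
  - destruct x as [a b]; unfold rel_comp, G3; simpl. intros [y [h1 h2]]; congruence.
  - destruct x as [a b]; unfold rel_comp, G3; simpl. intro h. exists b; auto.
  - unfold mu3; simpl. ind_simpl. simpl. field. lra.
  - intros B _ Hs. unfold mu3; simpl.
    assert (~ B ii) by (intro h; destruct (Hs ii h); discriminate).
    destruct (classic (B r0)); destruct (classic (B r1)); ind_simpl; simpl; ring.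
  - intros B _. unfold mu3x2, mu3; simpl.
    destruct (classic (B r0)); destruct (classic (B r1)); destruct (classic (B ii));
      ind_simpl; simpl; field; lra.
Qed.
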